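(* Let $X$ be a binary $N\times t$ matrix that is 3-good, let $S\subseteq[t]$ with $|S|=3$, $\mathbf{y}=r(X,S)$, $H=H(X,3,\mathbf{y})=([t],E)$, $L_1=\log_2\log_2 t$, $L_2=3L_1$. Let $G'=([t],E')$ be the graph in which distinct vertices $v_1,v_2$ are adjacent iff at least $L_2$ hyperedges of $E$ contain both; let $E_1\subseteq E$ be the set of hyperedges containing some edge of $G'$ as a subset, and $E_2=E\setminus E_1$. Then there exists a partition of $E_2$ into $M\le 96L_1^2L_2^2$ disjoint sets $E_2=\bigsqcup_{i=1}^M E_{2,i}$ such that: (1) no two distinct intersecting hyperedges lie in the same set, i.e. if $e_1\in E_{2,i}$, $e_2\in E_{2,j}$, $e_1\ne e_2$ and $e_1\cap e_2\neq\emptyset$, then $i\neq j$; (2) if $e_1\in E_{2,i}$, $e_2\in E_{2,j}$, $e_1\ne e_2$, and there is a hyperedge $e\in E$ (from $E_1$ or $E_2$) with $e\cap e_1\neq\emptyset$ and $e\cap e_2\neq\emptyset$, then $i\neq j$.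
   Context: For a binary $N\times t$ matrix $X$ with columns $x(1),\dots,x(t)$ and $S\subseteq[t]$, $r(X,S)=\bigvee_{j\in S}x(j)$ (coordinatewise Boolean OR). For $\mathbf{y}\in\{0,1\}^N$, $H(X,3,\mathbf{y})$ is the $3$-uniform hypergraph on $[t]$ whose hyperedges are all $3$-element $S\subseteq[t]$ with $r(X,S)=\mathbf{y}$. A $(3,k)$ configuration of size $L$ is a set of $L$ hyperedges $e_1,\dots,e_L$ with a set $U$, $|U|=k$, such that $e_i\cap e_j=U$ for all $i\ne j$. Fix $p\in(0,1)$; $\Pr_1(s,w)$ is the probability that the OR of $s$ independent uniformly random length-$N$ binary columns of weight $\lfloor pN\rfloor$ equals a fixed vector of weight $w$; $\Pr_2(s,w_1,w)$ is the probability that the OR of $s$ such columns together with a fixed column $\mathbf{y}_1$ of weight $w_1$ equals a fixed vector $\mathbf{y}$ of weight $w$ with $\mathbf{y}\vee\mathbf{y}_1=\mathbf{y}$. With $L_1=\log_2\log_2 t$, $X$ is 3-good if: (1) for every $\mathbf{y}$, $H(X,3,\mathbf{y})$ has no $(3,1)$ configuration of size $L_1$; (2) for every $\mathbf{y}$ with $|\mathbf{y}|=w$, $H(X,3,\mathbf{y})$ has no $(3,0)$ configuration of size $10\max(t^3\Pr_1(3,w),N)$; (3) for all $\mathbf{y},\mathbf{y}_1$ with $\mathbf{y}\vee\mathbf{y}_1=\mathbf{y}$, $|\mathbf{y}_1|=w_1$, $|\mathbf{y}|=w$, the number of $j$ with $\mathbf{y}_1\vee x(j)=\mathbf{y}$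 is less than $10B(N,t)$, where $B(N,t)=t\Pr_2(1,w_1,w)$ if this exceeds $N$, $B(N,t)=N$ if $t^{-1/\sqrt{L_1}}\le t\Pr_2(1,w_1,w)\le N$, and $B(N,t)=L_1/10$ if $t\Pr_2(1,w_1,w)<t^{-1/\sqrt{L_1}}$; (4) for every $\mathbf{y}$ with $|\mathbf{y}|=w$ and integer $w_1\le w$, the number of pairwise disjoint pairs $\{j_1,j_2\}\subseteq[t]$ with $x(j_1)\vee x(j_2)\vee\mathbf{y}=\mathbf{y}$ and $|x(j_1)\vee x(j_2)|=w_1$ is less than $10\max(N,\binom{w}{w_1}t^2\Pr_1(2,w_1))$. *)

(* Defs.v *)
From mathcomp Require Import all_boot all_algebra.
From Stdlib Require Import Reals.

Set Implicit Arguments.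
Unset Strict Implicit.
Unset Printing Implicit Defensive.

Definition bvec (N : nat) := {ffun 'I_N -> bool}.

Definition wt N (v : bvec N) : nat := #|[set i | v i]|.

Definition bor N (u v : bvec N) : bvec N := [ffun i => u i || v i].

Definition colv N t (X : 'M[bool]_(N, t)) (j : 'I_t) : bvec N :=
  [ffun i => X i j].

Definition rX N t (X : 'M[bool]_(N, t)) (S : {set 'I_t}) : bvec N :=
  [ffun i => [exists j in S, X i j]].

Definition ORs N s (c : {ffun 'I_s -> bvec N}) : bvec N :=
  [ffun i => [exists j, c j i]].

(* canonical fixed vector of weight w (first w coordinates), w <= N *)
Definition firstw N (w : nat) : bvec N := [ffun i : 'I_N => (i < w)%N].

Definition kp (N : nat) (p : R) : nat := Z.to_nat (Int_part (p * INR N)).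

(* Pr_1(s,w): probability that the OR of s independent uniformly random
   weight-floor(pN) columns equals a fixed vector of weight w. *)
Definition Pr1 (N : nat) (p : R) (s w : nat) : R :=
  (INR #|[set c : {ffun 'I_s -> bvec N} |
           [forall j, wt (c j) == kp N p] && (ORs c == firstw N w)]|
   / (INR 'C(N, kp N p) ^ s))%R.

(* Pr_2(s,w1,w): probability that the OR of s such columns together with a
   fixed column y1 of weight w1 equals a fixed y of weight w with y1 <= y. *)
Definition Pr2 (N : nat) (p : R) (s w1 w : nat) : R :=
  (INR #|[set c : {ffun 'I_s -> bvec N} |
           [forall j, wt (c j) == kp N p] &&
           (bor (ORs c) (firstw N w1) == firstw N w)]|
   / (INR 'C(N, kp N p) ^ s))%R.

Definition log2 (x : R) : R := (ln x / ln 2)%R.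

Definition L1 (t : nat) : R := log2 (log2 (INR t)).

Definition Hedges N t (X : 'M[bool]_(N, t)) (y : bvec N) : {set {set 'I_t}} :=
  [set e : {set 'I_t} | (#|e| == 3) && (rX X e == y)].

Definition config N t (X : 'M[bool]_(N, t)) (y : bvec N) (k : nat) (L : R)
  (F : {set {set 'I_t}}) : Prop :=
  F \subset Hedges X y /\ (L <= INR #|F|)%R /\
  exists U : {set 'I_t}, #|U| = k /\
    forall e1 e2, e1 \in F -> e2 \in F -> e1 != e2 -> e1 :&: e2 = U.

Definition Bfun (N t : nat) (p : R) (w1 w : nat) : R :=
  let v := (INR t * Pr2 N p 1 w1 w)%R in
  if Rlt_dec (INR N) v then v
  else if Rle_dec (Rpower (INR t) (- / sqrt (L1 t))) v then INR N
  else (L1 t / 10)%R.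

Definition good3 N t (p : R) (X : 'M[bool]_(N, t)) : Prop :=
  (forall (y : bvec N) F, ~ config X y 1 (L1 t) F) /\
  (forall (y : bvec N) F,
      ~ config X y 0 (10 * Rmax (INR t ^ 3 * Pr1 N p 3 (wt y)) (INR N))%R F) /\
  (forall y y1 : bvec N, bor y y1 = y ->
      (INR #|[set j | bor y1 (colv X j) == y]|
        < 10 * Bfun N t p (wt y1) (wt y))%R) /\
  (forall (y : bvec N) (w1 : nat), (w1 <= wt y)%N ->
     forall P : {set {set 'I_t}},
       (forall q, q \in P ->
          #|q| = 2 /\ bor (rX X q) y = y /\ wt (rX X q) = w1) ->
       (forall q1 q2, q1 \in P -> q2 \in P -> q1 != q2 -> [disjoint q1 & q2]) ->
       (INR #|P| < 10 * Rmax (INR N) (INR 'C(wt y, w1) * INR t ^ 2 * Pr1 N p 2 w1))%R).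

Definition adjG N t (X : 'M[bool]_(N, t)) (y : bvec N) (L2 : R) (v1 v2 : 'I_t) : bool :=
  (v1 != v2) &&
  (if Rle_dec L2 (INR #|[set e in Hedges X y | (v1 \in e) && (v2 \in e)]|)
   then true else false).

Definition E1 N t (X : 'M[bool]_(N, t)) (y : bvec N) (L2 : R) : {set {set 'I_t}} :=
  [set e in Hedges X y |
     [exists v1, exists v2, [&& v1 \in e, v2 \in e & adjG X y L2 v1 v2]]].

Definition E2 N t (X : 'M[bool]_(N, t)) (y : bvec N) (L2 : R) : {set {set 'I_t}} :=
  Hedges X y :\: E1 X y L2.

(* Main.v *)
Require Import Defs.
From mathcomp Require Import all_boot all_algebra.
From Stdlib Require Import Reals.
From Stdlib Require Import Lra.
From mathcomp Require Import zify.
Set Implicit Arguments.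
Unset Strict Implicit.
Unset Printing Implicit Defensive.

Lemma card_bigcup_le (I T : finType) (P : pred I) (F : I -> {set T}) :
  #|\bigcup_(i | P i) F i| <= \sum_(i | P i) #|F i|.
Proof.
elim/big_rec2: _ => [|i n U Pi IH]; first by rewrite cards0.
rewrite cardsU; apply: leq_trans (leq_subr _ _) _; by rewrite leq_add2l.
Qed.

Lemma cardb (T : finType) (A : {set T}) (P : pred T) : #|[set y in A | P y]| = \sum_(y in A) (P y : nat).
Proof.
rewrite -big_mkcondr /= sum1_card; apply: eq_card => y; by rewrite !inE.
Qed.

Section Greedy.
Variable T : finType.
Variables (c : rel T) (Out : T -> {set T}) (D : nat).
Hypothesis csym : forall x y, c x y = c y x.
Hypothesis hOut : forall x y, x != y -> c x y -> (y \in Out x) || (x \in Out y).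
Hypothesis hD : forall x, #|Out x| <= D.

Lemma indeg_small (A : {set T}) : A != set0 ->
  exists2 x, x \in A & #|[set y in A | x \in Out y]| <= D.
Proof.
case/set0Pn=> x0 Ax0.
set g := fun x => #|[set y in A | x \in Out y]|.
have := arg_minnP g Ax0.
case=> x Ax hmin; exists x => //.
have h1 : #|A| * g x <= \sum_(z in A) g z.
  rewrite -sum_nat_const; apply: leq_sum => z Az; exact: hmin.
have h2 : \sum_(z in A) g z <= #|A| * D.
  have -> : \sum_(z in A) g z = \sum_(z in A) \sum_(y in A) (z \in Out y : nat).
    apply: eq_bigr => z _; by rewrite /g cardb.
  rewrite exchange_big /= -sum_nat_const; apply: leq_sum => y _.
  apply: leq_trans (hD y).
  rewrite -cardb; apply: subset_leq_card; apply/subsetP => z; by rewrite inE => /andP [].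
have: #|A| * g x <= #|A| * D := leq_trans h1 h2.
rewrite leq_pmul2l //; apply/card_gt0P; by exists x0.
Qed.

Lemma greedy n : forall A : {set T}, #|A| <= n ->
  exists f : T -> 'I_(2 * D).+1, forall x y, x \in A -> y \in A -> x != y -> c x y -> f x != f y.
Proof.
elim: n => [|n IH] A hA.
  exists (fun _ => ord0) => x y Ax; move: hA; rewrite leqn0 cards_eq0 => /eqP A0.
  by rewrite A0 inE in Ax.
have [->|A0] := eqVneq A set0.
  by exists (fun _ => ord0) => x y; rewrite inE.
have [x Ax hx] := indeg_small A0.
have [f' hf'] : exists f' : T -> 'I_(2 * D).+1, forall x0 y0, x0 \in A :\ x -> y0 \in A :\ x -> x0 != y0 -> c x0 y0 -> f' x0 != f' y0.
  apply: IH; rewrite (cardsD1 x) Ax /= add1n ltnS in hA.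
  exact: hA.
set Nb := [set y in A | (y != x) && c x y].
have hNb : #|Nb| <= 2 * D.
  apply: (@leq_trans (#|Out x| + #|[set y in A | x \in Out y]|)); last first.
    by rewrite mul2n -addnn leq_add.
  apply: (@leq_trans #|Out x :|: [set y in A | x \in Out y]|); last first.
    by rewrite cardsU leq_subr.
  apply: subset_leq_card; apply/subsetP => y; rewrite !inE => /andP [Ay /andP [yx cxy]].
  have := hOut (x:=x) (y:=y); rewrite eq_sym yx cxy => /(_ isT isT) /orP [->//|->].
  by rewrite Ay orbT.
set U := [set f' y | y in Nb].
have : 0 < #|~: U|.
  have := cardsC U; rewrite card_ord => h.
  have hU : #|U| <= 2 * D := leq_trans (leq_imset_card _ _) hNb.
  lia.
case/card_gt0P => k; rewrite inE => kU.
exists (fun z => if z == x then k else f' z) => x0 y0 Ax0 Ay0 xy cxy.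
have inU : forall z, z \in A -> z != x -> c x z -> f' z \in U.
  move=> z Az zx cz; apply: imset_f; by rewrite inE Az zx cz.
case: (eqVneq x0 x) => [ex0|nx0]; case: (eqVneq y0 x) => [ey0|ny0].
- by rewrite ex0 ey0 eqxx in xy.
- apply/eqP => hk; move: kU; rewrite hk inU //; by rewrite -ex0.
- apply/eqP => hk; move: kU; rewrite -hk inU // -ey0 csym //.
- apply: hf' => //; by rewrite !inE ?nx0 ?ny0.
Qed.
End Greedy.

Lemma triple (T : finType) (e : {set T}) a b c : #|e| = 3 ->
  a \in e -> b \in e -> c \in e -> a != b -> a != c -> b != c ->
  e = [set a; b; c].
Proof.
move=> he ae be ce ab ac bc; apply/eqP; rewrite eq_sym eqEcard; apply/andP; split.
  by apply/subsetP => z; rewrite !inE => /orP [/orP [] | ] /eqP ->.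
by rewrite he -setUA cardsU1 cards2 bc !inE negb_or ab ac.
Qed.

Section Hyper.
Variable T : finType.
Variable E : {set {set T}}.
Hypothesis hE3 : forall e, e \in E -> #|e| = 3.
Variable adj : rel T.
Hypothesis adj_neq : forall v u, adj v u -> v != u.
Hypothesis adj_sym : forall v u, adj v u = adj u v.
Variables m s : nat.
Definition Star v u := [set e in E | (v \in e) && (u \in e)].
Definition valid v (F : {set {set T}}) :=
  [&& F \subset E, [forall f in F, v \in f] &
      [forall f1 in F, forall f2 in F, (f1 != f2) ==> (f1 :&: f2 == [set v])]].
Hypothesis hfam : forall v F, valid v F -> #|F| <= m.
Hypothesis hheavy : forall v u, adj v u -> 2 * m < #|Star v u|.
Hypothesis hlight : forall v u, v != u -> ~~ adj v u -> #|Star v u| <= s.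

Lemma valid0 v : valid v set0.
Proof. by rewrite /valid sub0set; apply/and3P; split => //; apply/forallP => f; rewrite inE. Qed.

Definition Fv v := [arg max_(F > set0 | valid v F) #|F|].
Definition Cv v := \bigcup_(f in Fv v) (f :\ v).
Definition HN v := [set u | adj v u].
Definition LE v := [set e in E | (v \in e) && [forall u in e, (u != v) ==> ~~ adj v u]].
Definition Rset v := v |: (HN v :|: (\bigcup_(z in HN v) HN z) :|: \bigcup_(e in LE v) (e :\ v)).
Definition E2' := E :\: [set e in E | [exists v1, exists v2, [&& v1 \in e, v2 \in e & adj v1 v2]]].
Definition St2 w := [set e in E2' | w \in e].
Definition Out e1 := [set e2 in E2' | (e1 \in E2') && [exists v in e1, exists w in e2, w \in Rset v]].

Lemma FvP v : valid v (Fv v) /\ forall F, valid v F -> #|F| <= #|Fv v|.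
Proof. rewrite /Fv; case: arg_maxnP; first exact: valid0. by move=> F h1 h2; split. Qed.

Lemma card_del v f : f \in E -> v \in f -> #|f :\ v| = 2.
Proof. move=> fE vf; have := cardsD1 v f; rewrite vf hE3 //; lia. Qed.

Lemma Fv_sub v f : f \in Fv v -> f \in E /\ v \in f.
Proof.
case: (FvP v) => /and3P [/subsetP sE /forallP hv _] _ fF; split; first exact: sE.
by have := hv f; rewrite fF.
Qed.

Lemma Cv_card v : #|Cv v| <= 2 * m.
Proof.
apply: leq_trans (card_bigcup_le _ _) _.
rewrite (eq_bigr (fun _ => 2)); last first.
  by move=> f fF; case: (Fv_sub fF) => fE vf; rewrite card_del.
rewrite sum_nat_const mulnC leq_pmul2l //; exact: (hfam (proj1 (FvP v))).
Qed.

Lemma notin_Cv v : v \notin Cv v.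
Proof. apply/bigcupP => -[f _]; by rewrite !inE eqxx. Qed.

Lemma cover v e : e \in E -> v \in e -> exists2 u, u \in e :\ v & u \in Cv v.
Proof.
move=> eE ve; suff : [exists u, (u \in e :\ v) && (u \in Cv v)] by case/existsP => u /andP [h1 h2]; exists u.
apply: contraT; rewrite negb_exists => /forallP hn.
have hnC : forall u, u \in e -> u != v -> u \notin Cv v.
  move=> u ue uv; have := hn u; by rewrite !inE ue uv.
case: (FvP v) => hval hmax.
have [eF|eF] := boolP (e \in Fv v).
  have : 0 < #|e :\ v| by rewrite card_del.
  case/card_gt0P => u; rewrite !inE => /andP [uv ue].
  have := hnC u ue uv; case/negP; apply/bigcupP; exists e => //; by rewrite !inE uv ue.
have : valid v (e |: Fv v).
  move: hval => /and3P [sE /forallP hv /forallP hp].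
  apply/and3P; split.
  - by rewrite subUset sub1set eE sE.
  - apply/forallP => f; apply/implyP; rewrite !inE; case/orP => [/eqP -> //|fF]; by have := hv f; rewrite fF.
  - have key : forall f, f \in Fv v -> e :&: f == [set v].
      move=> f fF; case: (Fv_sub fF) => fE vf; apply/eqP/setP => z; rewrite !inE.
      have [->|zv] := eqVneq z v; first by rewrite ve vf.
      apply/negbTE/negP => /andP [ze zf].
      have := hnC z ze zv; case/negP; apply/bigcupP; exists f => //; by rewrite !inE zv zf.
    apply/forallP => f1; apply/implyP; move=> /setU1P [->|f1F];
    apply/forallP => f2; apply/implyP; move=> /setU1P [->|f2F]; apply/implyP => hne.
    + by rewrite eqxx in hne.
    + exact: key.
    + by rewrite setIC key.
    + by have := hp f1; rewrite f1F => /forallP /(_ f2); rewrite f2F hne.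
move/hmax; rewrite cardsU1 eF; lia.
Qed.

Lemma HN_sub v : HN v \subset Cv v.
Proof.
apply/subsetP => w; rewrite inE => avw; apply: contraT => wC.
have hvw := adj_neq avw.
have : #|Star v w| <= #|Cv v|.
  apply: (@leq_trans #|[set [set v; w; u] | u in Cv v]|); last exact: leq_imset_card.
  apply: subset_leq_card; apply/subsetP => e; rewrite inE => /andP [eE /andP [ve we]].
  case: (cover eE ve) => u; rewrite !inE => /andP [uv ue] uC.
  apply/imsetP; exists u => //; apply: triple => //; first exact: hE3.
  - by rewrite eq_sym.
  - by apply: contraNneq wC => ->.
have := hheavy avw; have := Cv_card v; lia.
Qed.

Lemma HN_card v : #|HN v| <= 2 * m.
Proof. exact: leq_trans (subset_leq_card (HN_sub v)) (Cv_card v). Qed.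

Lemma LE_card v : #|LE v| <= 2 * m * s.
Proof.
have : LE v \subset \bigcup_(u in Cv v | ~~ adj v u) Star v u.
  apply/subsetP => e; rewrite inE => /andP [eE /andP [ve /forallP hl]].
  case: (cover eE ve) => u; rewrite !inE => /andP [uv ue] uC.
  apply/bigcupP; exists u; first by rewrite uC /=; have := hl u; rewrite ue uv.
  by rewrite inE eE ve ue.
move/subset_leq_card/leq_trans; apply.
apply: leq_trans (card_bigcup_le _ _) _.
apply: (@leq_trans (\sum_(u in Cv v) s)); last first.
  by rewrite sum_nat_const; apply: leq_mul => //; exact: Cv_card.
rewrite big_mkcondr /=; apply: leq_sum => u uC; case: ifP => // hl.
apply: hlight => //; apply: contraNneq (notin_Cv v) => vu; by move: uC; rewrite -vu.
Qed.

Lemma St2_sub w : St2 w \subset LE w.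
Proof.
apply/subsetP => e; rewrite !inE => /andP [/andP [hn eE] we]; rewrite eE we /=.
apply/forallP => u; apply/implyP => ue; apply/implyP => _.
apply: contra hn => a; apply/andP; split => //; apply/existsP; exists w; apply/existsP; exists u; by rewrite we ue a.
Qed.

Definition rb := 1 + 2 * m + 2 * m * (2 * m) + 2 * (2 * m * s).

Lemma R_card v : #|Rset v| <= rb.
Proof.
have h1 := HN_card v.
have h2 : #|\bigcup_(z in HN v) HN z| <= 2 * m * (2 * m).
  apply: leq_trans (card_bigcup_le _ _) _.
  apply: (@leq_trans (\sum_(z in HN v) (2 * m))); first by apply: leq_sum => z _; exact: HN_card.
  by rewrite sum_nat_const leq_mul2r HN_card orbT.
have h3 : #|\bigcup_(e in LE v) (e :\ v)| <= 2 * (2 * m * s).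
  apply: leq_trans (card_bigcup_le _ _) _.
  rewrite (eq_bigr (fun _ => 2)); last first.
    by move=> e; rewrite inE => /andP [eE /andP [ve _]]; rewrite card_del.
  by rewrite sum_nat_const mulnC leq_mul2l LE_card orbT.
rewrite /Rset cardsU1 !cardsU /rb.
set A := \bigcup_(z in HN v) HN z in h2 *; set B := \bigcup_(e in LE v) (e :\ v) in h3 *.
have h0 : (v \notin HN v :|: A :|: B) <= 1 by case: (_ \notin _).
set q := 2 * m * (2 * m) in h2 *; set r := 2 * m * s in h3 *.
lia.
Qed.

Definition Dbound := 3 * (rb * (2 * m * s)).

Lemma Out_card e1 : #|Out e1| <= Dbound.
Proof.
have [e1E|e1E] := boolP (e1 \in E2'); last first.
  suff -> : Out e1 = set0 by rewrite cards0.
  by apply/setP => z; rewrite inE (negbTE e1E) /= andbF in_set0.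
have : Out e1 \subset \bigcup_(v in e1) \bigcup_(w in Rset v) St2 w.
  apply/subsetP => e2; rewrite inE => /andP [e2E /andP [_ /existsP [v /andP [ve1 /existsP [w /andP [we2 wR]]]]]].
  apply/bigcupP; exists v => //; apply/bigcupP; exists w => //; by rewrite inE e2E.
move/subset_leq_card/leq_trans; apply.
apply: leq_trans (card_bigcup_le _ _) _.
have e13 : #|e1| = 3 by apply: hE3; move: e1E; rewrite inE => /andP [].
apply: (@leq_trans (\sum_(v in e1) (rb * (2 * m * s)))); last by rewrite sum_nat_const e13.
apply: leq_sum => v _; apply: leq_trans (card_bigcup_le _ _) _.
apply: (@leq_trans (\sum_(w in Rset v) (2 * m * s))).
  apply: leq_sum => w _; exact: leq_trans (subset_leq_card (St2_sub w)) (LE_card w).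
by rewrite sum_nat_const leq_mul2r R_card orbT.
Qed.

Definition conf (e1 e2 : {set T}) :=
  [&& e1 \in E2', e2 \in E2' & [exists e in E, (e :&: e1 != set0) && (e :&: e2 != set0)]].

Lemma conf_sym x y : conf x y = conf y x.
Proof.
by rewrite /conf; apply/and3P/and3P => -[a b /existsP [e /and3P [h1 h2 h3]]];
  split => //; apply/existsP; exists e; rewrite h1 h2 h3.
Qed.

Lemma conf_out x y : x != y -> conf x y -> (y \in Out x) || (x \in Out y).
Proof.
move=> _ /and3P [xE yE /existsP [e /andP [eE /andP [/set0Pn [v] /setIP [ve vx] /set0Pn [w] /setIP [we wy]]]]].
suff : (w \in Rset v) || (v \in Rset w).
  case/orP => h; [apply/orP; left|apply/orP; right]; rewrite inE ?xE ?yE /=;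
  apply/existsP; [exists v|exists w]; rewrite ?vx ?wy /=; apply/existsP; [exists w|exists v];
  by rewrite ?wy ?vx.
have [->|vw] := eqVneq v w; first by rewrite /Rset !inE eqxx.
have [eL|eL] := boolP (e \in LE v).
  apply/orP; left; rewrite /Rset !inE; apply/orP; right; apply/orP; right.
  apply/bigcupP; exists e => //; by rewrite !inE we eq_sym vw.
have [eL'|eL'] := boolP (e \in LE w).
  apply/orP; right; rewrite /Rset !inE; apply/orP; right; apply/orP; right.
  apply/bigcupP; exists e => //; by rewrite !inE ve vw.
move: eL eL'; rewrite !inE eE ve we /= => /forallPn [u].
rewrite negb_imply => /andP [ue]; rewrite negb_imply negbK => /andP [uv avu].
move=> /forallPn [u']; rewrite negb_imply => /andP [u'e]; rewrite negb_imply negbK => /andP [u'w awu'].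
have [euw|uw] := eqVneq u w.
  by apply/orP; left; rewrite /Rset ?inE -euw avu orbT.
have [eu'v|u'v] := eqVneq u' v.
  by apply/orP; right; rewrite /Rset ?inE -eu'v awu' orbT.
have he : e = [set v; w; u] by apply: triple => //; [exact: hE3 | by rewrite eq_sym | by rewrite eq_sym].
have uu' : u' = u.
  by move: u'e; rewrite he !inE (negbTE u'v) (negbTE u'w) /= => /eqP.
apply/orP; left; rewrite /Rset ?inE; apply/or3P; apply: Or32; apply/orP; right.
apply/bigcupP; exists u; rewrite inE //; by rewrite adj_sym -uu'.
Qed.

Theorem color_E2 : exists P : {set {set {set T}}},
  partition P E2' /\ #|P| <= (2 * Dbound).+1 /\
  forall B, B \in P -> forall e1 e2, e1 \in B -> e2 \in B -> e1 != e2 -> ~~ conf e1 e2.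
Proof.
have [f hf] := greedy conf_sym conf_out Out_card (leqnn #|E2'|).
exists (preim_partition f E2'); split; first exact: preim_partitionP.
split.
  apply: (@leq_trans #|[set [set y in E2' | k == f y] | k : 'I_(2 * Dbound).+1]|); last first.
    by apply: leq_trans (leq_imset_card _ _) _; rewrite card_ord.
  apply: subset_leq_card; apply/subsetP => B; rewrite /preim_partition /equivalence_partition.
  case/imsetP => x xE ->; apply/imsetP; by exists (f x).
move=> B; rewrite /preim_partition /equivalence_partition; case/imsetP => x xE -> e1 e2.
move/setIdP => [e1E /eqP h1] /setIdP [e2E /eqP h2] ne; apply/negP => c12.
by have := hf _ _ e1E e2E ne c12; rewrite -h1 -h2 eqxx.
Qed.
End Hyper.

Lemma final_ineq (M S a : R) : (0 <= M)%R -> (M < a)%R -> (0 <= S)%R -> (S < 3 * a)%R -> (1 < a)%R ->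
  (2 * (3 * ((1 + 2*M + 2*M*(2*M) + 2*(2*M*S)) * (2*M*S))) + 1 <= 96 * a ^ 2 * (3 * a) ^ 2)%R.
Proof.
move=> hM hMa hS hSa ha.
have hMS : (M * S <= a * (3 * a))%R by apply: Rmult_le_compat; lra.
have hMM : (M * M <= a * a)%R by apply: Rmult_le_compat; lra.
have hM2S : (M * M * S <= a * a * (3 * a))%R.
  apply: Rmult_le_compat; try lra; nra.
have hM3 : (M * M * M <= a * a * a)%R by apply: Rmult_le_compat; nra.
have hM3S : (M * M * M * S <= a * a * a * (3 * a))%R.
  by apply: Rmult_le_compat; nra.
have hM2S2 : (M * M * S * S <= a * a * (3 * a) * (3 * a))%R.
  apply: Rmult_le_compat; try nra.
have h1 : (1 <= a * a)%R by nra.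
have ha2 : (a * a <= a * a * a * a)%R.
  have := Rmult_le_compat_l (a * a) 1 (a * a); nra.
have ha3 : (a * a * a <= a * a * a * a)%R.
  have := Rmult_le_compat_l (a * a * a) 1 a; nra.
have ha4 : (1 <= a * a * a * a)%R by nra.
nra.
Qed.

Theorem lemma6 (N t : nat) (p : R) (hp : (0 < p < 1)%R)
  (X : 'M[bool]_(N, t)) (S : {set 'I_t}) :
  good3 p X -> #|S| = 3 ->
  let y := rX X S in
  let E := Hedges X y in
  let L2 := (3 * L1 t)%R in
  exists P : {set {set {set 'I_t}}},
    partition P (E2 X y L2) /\
    (INR #|P| <= 96 * L1 t ^ 2 * L2 ^ 2)%R /\
    forall B, B \in P -> forall e1 e2, e1 \in B -> e2 \in B -> e1 != e2 ->
      e1 :&: e2 = set0 /\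
      ~ (exists e, e \in E /\ e :&: e1 != set0 /\ e :&: e2 != set0).
Proof.
move=> hg hS y E L2.
case: hg => h1 _.
have [v0 v0S] : exists v0, v0 \in S by apply/card_gt0P; rewrite hS.
have ha : (1 < L1 t)%R.
  apply: Rnot_le_lt => hle; apply: (h1 y [set S]); split.
    by rewrite sub1set inE hS eqxx /=.
  split; first by rewrite cards1 /=.
  exists [set v0]; split; first by rewrite cards1.
  by move=> e1 e2; rewrite !inE => /eqP -> /eqP ->; rewrite eqxx.
set a := L1 t in ha.
have hE3 : forall e, e \in E -> #|e| = 3 by move=> e; rewrite inE => /andP [/eqP].
set adj := adjG X y L2.
have adj_neq : forall v u, adj v u -> v != u by move=> v u /andP [].
have adj_sym : forall v u, adj v u = adj u v.
  move=> v u; rewrite /adj /adjG eq_sym.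
  have -> : [set e in Hedges X y | (v \in e) && (u \in e)] = [set e in Hedges X y | (u \in e) && (v \in e)].
    by apply/setP => e; rewrite !inE [(v \in e) && _]andbC.
  by [].
set Pm := [pred F | [exists v, valid E v F]].
set m := \max_(F | Pm F) #|F|.
have hfam : forall v F, valid E v F -> #|F| <= m.
  move=> v F hv; apply: (leq_bigmax_cond (P := Pm)); rewrite /Pm inE; apply/existsP; by exists v.
have hm : (INR m < a)%R.
  have hpos : 0 < #|Pm|.
    apply/card_gt0P; exists set0; rewrite /Pm inE; apply/existsP; exists v0; exact: valid0.
  have [F hF hmF] := eq_bigmax_cond (fun F : {set {set 'I_t}} => #|F|) hpos.
  move: hF; rewrite /Pm inE => /existsP [v hv].
  have -> : m = #|F| by rewrite -hmF /m; apply: eq_bigl => G; rewrite inE.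
  apply: Rnot_le_lt => hle; apply: (h1 y F); move: hv => /and3P [sE _ /forallP hp2].
  split; first exact: sE.
  split; first exact: hle.
  exists [set v]; split; first by rewrite cards1.
  move=> e1 e2 e1F e2F ne; apply/eqP.
  by have := hp2 e1; rewrite e1F => /forallP /(_ e2); rewrite e2F ne.
set Pl := fun q : 'I_t * 'I_t => (q.1 != q.2) && ~~ adj q.1 q.2.
set s := \max_(q | Pl q) #|Star E q.1 q.2|.
have hlight : forall v u, v != u -> ~~ adj v u -> #|Star E v u| <= s.
  move=> v u vu nadj; apply: (@leq_bigmax_cond _ Pl (fun q => #|Star E q.1 q.2|) (v, u)).
  by rewrite /Pl /= vu nadj.
have hs : (INR s < 3 * a)%R.
  have [hne|h0] := boolP (0 < #|Pl|).
    have [q hq hmq] := eq_bigmax_cond (fun q : 'I_t * 'I_t => #|Star E q.1 q.2|) hne.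
    move: hq; rewrite unfold_in /Pl /= => /andP [q12 nq].
    have -> : s = #|Star E q.1 q.2| by rewrite -hmq /s; apply: eq_bigl => G; by rewrite unfold_in.
    move: nq; rewrite /adj /adjG q12 /=; case: Rle_dec => // hnle _.
    apply: Rnot_le_lt => hle; apply: hnle; exact: hle.
  rewrite /s big_pred0; first by simpl; lra.
  move=> q; apply/negbTE; apply: contra h0 => hq; apply/card_gt0P; exists q; by rewrite unfold_in.
have hheavy : forall v u, adj v u -> 2 * m < #|Star E v u|.
  move=> v u; rewrite /adj /adjG => /andP [_]; case: Rle_dec => // hle _.
  have hle' : (3 * a <= INR #|Star E v u|)%R by exact: hle.
  apply/ltP; apply: INR_lt; rewrite -multE mult_INR.
  have : (0 <= INR m)%R by apply: pos_INR.
  have h2 : INR 2 = 2%R by rewrite /=; ring.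
  rewrite h2; lra.
have [P [hpart [hcard hconf]]] := color_E2 hE3 adj_neq adj_sym hfam hheavy hlight.
exists P; split; first exact: hpart.
split.
  apply: Rle_trans (le_INR _ _ (leP hcard)) _.
  have -> : INR (2 * Dbound m s).+1 = (2 * (3 * ((1 + 2*INR m + 2*INR m*(2*INR m) + 2*(2*INR m*INR s)) * (2*INR m*INR s))) + 1)%R.
    have i1 : INR 1 = 1%R by []. have i2 : INR 2 = 2%R by rewrite /=; ring. have i3 : INR 3 = 3%R by rewrite /=; ring.
    rewrite (S_INR (2 * Dbound m s)) /Dbound /rb -!multE -!plusE !mult_INR !plus_INR !mult_INR ?i1 ?i2 ?i3; rewrite ?(erefl : INR 0 = 0%R); ring.
  rewrite /L2; apply: final_ineq => //; [exact: pos_INR | exact: pos_INR].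
move=> B BP e1 e2 e1B e2B ne.
have inE2 : forall e, e \in B -> e \in E2' E adj.
  move=> e eB; move: hpart => /and3P [/eqP <- _ _]; apply/bigcupP; by exists B.
have hc := hconf B BP e1 e2 e1B e2B ne.
move: hc; rewrite /conf (inE2 _ e1B) (inE2 _ e2B) /= => hc.
have e1E : e1 \in E by move: (inE2 _ e1B); rewrite inE => /andP [].
split.
  apply/eqP; apply: contraNT hc => hne; apply/existsP; exists e1; rewrite e1E setIid hne andbT /=.
  by rewrite -card_gt0 (hE3 _ e1E).
move=> [e [eE [he1 he2]]]; move/negP: hc; apply; apply/existsP; exists e; by rewrite eE he1 he2.
Qed.
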